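(* Let $k$ and $d$ be two positive integers. Let $f$ be any $n$-variable Boolean function such that ${AI}(f)=k$. Let $\delta$ be any $n$-variable Boolean function such that $w_H(\delta)<\min(2^{n-k},2^{d+1}-1)$. Then $|{AI}(f+\delta)-{AI}(f)|\le d$.
   Context: An $n$-variable Boolean function is a map $\mathbb{F}_2^n\to\mathbb{F}_2$, with algebraic degree the degree of its algebraic normal form; $w_H(\delta)$ is the Hamming weight (number of $x$ with $\delta(x)=1$). ${LDA}(h)$ is the minimum algebraic degree of a nonzero $g$ with $h\cdot g=0$, and the algebraic immunity is ${AI}(f)=\min({LDA}(f),{LDA}(1+f))$. *)

(* Defs.v *)
From mathcomp Require Import all_boot.
Set Implicit Arguments. Unset Strict Implicit. Unset Printing Implicit Defensive.

(* Points of F_2^n and n-variable Boolean functions F_2^n -> F_2 (F_2 = bool, + = xor). *)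
Definition vec (n : nat) := {ffun 'I_n -> bool}.
Definition boolfun (n : nat) := {ffun vec n -> bool}.

Definition bf_add n (f g : boolfun n) : boolfun n := [ffun x => f x (+) g x].
Definition bf_mul n (f g : boolfun n) : boolfun n := [ffun x => f x && g x].
Definition bf_one n : boolfun n := [ffun _ => true].
Definition bf_zero n : boolfun n := [ffun _ => false].

(* Algebraic normal form: coefficients a_S for monomials prod_{i in S} x_i,
   evaluated as the xor-sum of the monomials with a_S = 1. *)
Definition anf_eval n (a : {ffun {set 'I_n} -> bool}) (x : vec n) : bool :=
  \big[addb/false]_(S : {set 'I_n} | a S) [forall i in S, x i].

Definition deg_le n (f : boolfun n) (d : nat) : bool :=
  [exists a : {ffun {set 'I_n} -> bool},
     [forall x, f x == anf_eval a x] && [forall S, a S ==> (#|S| <= d)]].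

Definition has_ann_le n (h : boolfun n) (d : nat) : bool :=
  [exists g : boolfun n,
     [&& g != bf_zero n, bf_mul h g == bf_zero n & deg_le g d]].

(* Every Boolean
   function has degree <= n, so the minimum is over 0..n; the default n+1
   ("infinity") only occurs when h has no nonzero annihilator (h = 1). *)
Definition LDA n (h : boolfun n) : nat :=
  \big[minn/n.+1]_(j < n.+1 | has_ann_le h j) j.

Definition AI n (f : boolfun n) : nat := minn (LDA f) (LDA (bf_add (bf_one n) f)).

Definition wH n (f : boolfun n) : nat := #|[pred x | f x]|.

(* Main.v *)
Require Import Defs.
From mathcomp Require Import all_boot zify.
Set Implicit Arguments. Unset Strict Implicit. Unset Printing Implicit Defensive.

Section Deg.
Variable n : nat.

Definition mono (S : {set 'I_n}) (x : vec n) : bool := [forall i in S, x i].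

Definition isdeg (F : vec n -> bool) (d : nat) :=
  exists a : {ffun {set 'I_n} -> bool},
    (forall x, F x = anf_eval a x) /\ (forall S, a S -> #|S| <= d).

Lemma deg_leP (f : boolfun n) d : reflect (isdeg f d) (deg_le f d).
Proof.
apply: (iffP existsP) => [[a /andP[/forallP H1 /forallP H2]]|[a [H1 H2]]].
  exists a; split => [x|S]; first exact/eqP.
  by move/implyP: (H2 S).
exists a; apply/andP; split; apply/forallP => x; first by rewrite H1.
by apply/implyP; apply: H2.
Qed.

Lemma anfE a x : anf_eval a x = \big[addb/false]_S (a S && mono S x).
Proof. by rewrite /anf_eval big_mkcond; apply: eq_bigr => S _; case: (a S). Qed.

Lemma isdeg_ext F G d : isdeg F d -> (forall x, F x = G x) -> isdeg G d.
Proof. by move=> [a [H1 H2]] E; exists a; split => // x; rewrite -E. Qed.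

Lemma isdeg_le F d d' : d <= d' -> isdeg F d -> isdeg F d'.
Proof. by move=> le [a [H1 H2]]; exists a; split => // S /H2 /leq_trans; apply. Qed.

Lemma isdeg_mono (S : {set 'I_n}) d : #|S| <= d -> isdeg (mono S) d.
Proof.
move=> HS; exists [ffun T => T == S]; split => [x|T].
  by rewrite /anf_eval (eq_bigl (fun T => T == S)) ?big_pred1_eq // => T; rewrite ffunE.
by rewrite ffunE => /eqP ->.
Qed.

Lemma isdeg_const (b : bool) d : isdeg (fun _ => b) d.
Proof.
case: b.
  apply: (isdeg_ext (F := mono set0)); first by apply: isdeg_mono; rewrite cards0.
  by move=> x; apply/forallP => i; rewrite in_set0.
exists [ffun T => false]; split => [x|T]; last by rewrite ffunE.
by rewrite /anf_eval big_pred0 // => T; rewrite ffunE.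
Qed.

Lemma isdeg_coord (i : 'I_n) d : 0 < d -> isdeg (fun x => x i) d.
Proof.
move=> d0; apply: (isdeg_ext (F := mono [set i])).
  by apply: isdeg_mono; rewrite cards1.
move=> x; apply/forallP/idP => [/(_ i)|xi j]; first by rewrite set11.
by apply/implyP; rewrite in_set1 => /eqP ->.
Qed.

Lemma isdeg_add F G d : isdeg F d -> isdeg G d -> isdeg (fun x => F x (+) G x) d.
Proof.
move=> [a [Ha Ba]] [b [Hb Bb]]; exists [ffun S => a S (+) b S]; split => [x|S].
  rewrite Ha Hb !anfE -big_split /=; apply: eq_bigr => S _.
  by rewrite ffunE andb_addl.
rewrite ffunE => H; have: a S || b S by move: H; case: (a S); case: (b S).
by case/orP => [/Ba|/Bb].
Qed.

Lemma big_andl (I : finType) (P : pred I) (b : bool) (F : I -> bool) :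
  b && \big[addb/false]_(i | P i) F i = \big[addb/false]_(i | P i) (b && F i).
Proof.
elim/big_rec2: _ => [|i y1 y2 _ <-]; first by rewrite andbF.
by rewrite andb_addr.
Qed.

Lemma big_andr (I : finType) (P : pred I) (b : bool) (F : I -> bool) :
  \big[addb/false]_(i | P i) F i && b = \big[addb/false]_(i | P i) (F i && b).
Proof.
elim/big_rec2: _ => [|i y1 y2 _ <-]; first by [].
by rewrite andb_addl.
Qed.

Lemma mono_union (S T : {set 'I_n}) x : mono (S :|: T) x = mono S x && mono T x.
Proof.
apply/forallP/andP => [H|[/forallP H1 /forallP H2] i].
  split; apply/forallP => i; apply/implyP => Hi; move/implyP: (H i); apply;
    by rewrite in_setU Hi ?orbT.
by rewrite in_setU; apply/implyP => /orP[Hi|Hi];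
  [move/implyP: (H1 i); apply|move/implyP: (H2 i); apply].
Qed.

Lemma isdeg_mul F G d1 d2 : isdeg F d1 -> isdeg G d2 ->
  isdeg (fun x => F x && G x) (d1 + d2).
Proof.
move=> [a [Ha Ba]] [b [Hb Bb]].
exists [ffun U => \big[addb/false]_(p : {set 'I_n} * {set 'I_n} | p.1 :|: p.2 == U)
                    (a p.1 && b p.2)]; split => [x|U].
  rewrite Ha Hb !anfE.
  transitivity (\big[addb/false]_(p : {set 'I_n} * {set 'I_n})
                   (a p.1 && b p.2 && mono (p.1 :|: p.2) x)).
    rewrite big_andr (eq_bigr (fun S => \big[addb/false]_T
       ((a S && mono S x) && (b T && mono T x)))); last by move=> S _; exact: big_andl.
    rewrite pair_bigA /=; apply: eq_bigr => [[S T]] _ /=.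
    by rewrite mono_union; case: (a S); case: (b T); case: (mono S x); case: (mono T x).
  rewrite (partition_big (fun p => p.1 :|: p.2) predT) //=.
  apply: eq_bigr => V _; rewrite ffunE andbC big_andl; apply: eq_bigr => p /eqP ->.
  by rewrite andbC.
rewrite ffunE; apply: contraTT; rewrite -ltnNge => HU.
rewrite big1 // => p /eqP E; apply/negbTE; apply/negP => /andP[/Ba H1 /Bb H2].
move: HU; rewrite -E cardsU; lia.
Qed.


Lemma isdeg_neg_coord (i : 'I_n) d : 0 < d -> isdeg (fun x : vec n => ~~ x i) d.
Proof.
move=> d0; apply: (isdeg_ext (F := fun x : vec n => true (+) x i)); last by [].
exact: isdeg_add (isdeg_const _ _) (isdeg_coord _ d0).
Qed.

Lemma interp d (T : {set vec n}) (v : vec n -> bool) :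
  #|T| < 2 ^ d.+1 -> exists h, isdeg h d /\ {in T, forall z, h z = v z}.
Proof.
have [m] := ubnP #|T|; elim: m T d v => // m IH T d v HTm HTd.
case: (leqP #|T| 1) => [/card_le1_eqP T1|T2].
  exists (fun _ => if [pick z in T] is Some x0 then v x0 else false).
  split; first exact: isdeg_const.
  move=> z zT; case: pickP => [x0 x0T|/(_ z)]; last by rewrite zT.
  by rewrite (T1 _ _ zT x0T).
case/card_gt1P: (T2) => x [y [xT yT xy]].
case: d HTd => [|d] HTd; first by move: HTd; rewrite expn1; lia.
have [i Hi] : exists i, x i != y i.
  apply/existsP; apply: contraR xy => /existsPn H; apply/eqP/ffunP => i.
  by move: (H i); rewrite negbK => /eqP.
pose B := [set z : vec n | z i].
have inB z : (z \in B) = z i by rewrite inE.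
clearbody B.
have HC := cardsID B T.
have z0T : exists z, z \in T :\: B.
  by exists (if x i then y else x); case: ifP Hi => xi; rewrite !inE ?inB ?xT ?yT ?xi //=;
    case: (y i).
have z1T : exists z, z \in T :&: B.
  by exists (if x i then x else y); case: ifP Hi => xi; rewrite !inE ?inB ?xT ?yT ?xi //=;
    case: (y i).
move/card_gt0P: z0T => z0T; move/card_gt0P: z1T => z1T.
have L0 : #|T :\: B| <= #|T| by apply: subset_leq_card; apply: subsetDl.
have L1 : #|T :&: B| <= #|T| by apply: subset_leq_card; apply: subsetIl.
have L2 : forall a b p : nat, a + b < 2 * p -> a < p \/ b < p by move=> *; lia.
have L3 : forall a b m : nat, a + b < m.+1 -> 0 < a -> b < m by move=> *; lia.
have L4 : forall a b m : nat, a + b < m.+1 -> 0 < b -> a < m by move=> *; lia.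
have HT0m : #|T :\: B| < m by apply: L3 z1T; rewrite HC.
have HT1m : #|T :&: B| < m by apply: L4 z0T; rewrite HC.
have HT0d : #|T :\: B| < 2 ^ d.+2 by apply: leq_ltn_trans HTd.
have HT1d : #|T :&: B| < 2 ^ d.+2 by apply: leq_ltn_trans HTd.
have [Hs|Hs] : #|T :&: B| < 2 ^ d.+1 \/ #|T :\: B| < 2 ^ d.+1.
  by apply: L2; rewrite HC -expnS.
- have [h0 [dh0 Eh0]] := IH (T :\: B) d.+1 v HT0m HT0d.
  have [h1 [dh1 Eh1]] := IH (T :&: B) d (fun z => v z (+) h0 z) HT1m Hs.
  exists (fun z => h0 z (+) (z i && h1 z)); split.
    apply: isdeg_add => //; rewrite -add1n; apply: isdeg_mul => //.
    exact: isdeg_coord.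
  move=> z zT; case zi: (z i) => /=.
    by rewrite Eh1 ?inE ?inB ?zT ?zi //=; case: (h0 z); case: (v z).
  by rewrite addbF Eh0 // !inE inB zT zi.
- have [h0 [dh0 Eh0]] := IH (T :&: B) d.+1 v HT1m HT1d.
  have [h1 [dh1 Eh1]] := IH (T :\: B) d (fun z => v z (+) h0 z) HT0m Hs.
  exists (fun z => h0 z (+) (~~ z i && h1 z)); split.
    apply: isdeg_add => //; rewrite -add1n; apply: isdeg_mul => //.
    exact: isdeg_neg_coord.
  move=> z zT; case zi: (z i) => /=.
    by rewrite addbF Eh0 // !inE inB zT zi.
  by rewrite Eh1 ?inE ?inB ?zT ?zi //=; case: (h0 z); case: (v z).
Qed.


Lemma bigb (I : finType) (P Q : pred I) :
  \big[addb/false]_(i | P i) Q i = \big[addb/false]_(i | P i && Q i) true.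
Proof. by rewrite big_mkcondr; apply: eq_bigr => i _; case: (Q i). Qed.

Definition flip (j : 'I_n) (z : vec n) : vec n :=
  [ffun i => if i == j then ~~ z i else z i].

Lemma flipK j : cancel (flip j) (flip j).
Proof.
move=> z; apply/ffunP => i; rewrite !ffunE; case: eqP => // _; exact: negbK.
Qed.

Lemma big_flip (j : 'I_n) (P : pred (vec n)) (F : vec n -> bool) :
  (forall z, P (flip j z) = P z) -> (forall z, F (flip j z) = F z) ->
  \big[addb/false]_(z | P z) F z = false.
Proof.
move=> HP HF; rewrite (bigID (fun z : vec n => z j) P F) /=.
rewrite [X in _ (+) X](reindex_inj (can_inj (flipK j))) /=.
rewrite [X in _ (+) X](eq_big (fun z => P z && z j) F) ?addbb // => z.
  by rewrite HP ffunE eqxx negbK.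
Qed.

Lemma weight_lb (g : vec n -> bool) e : isdeg g e -> (exists x, g x) ->
  2 ^ (n - e) <= #|[pred x | g x]|.
Proof.
move=> [a [Ha Ba]] [x0 gx0].
have : [exists S, a S].
  apply: contraLR gx0 => /existsPn H; rewrite Ha /anf_eval big_pred0 // => S.
  exact/negbTE/H.
case/existsP => S0 aS0.
case: (arg_maxnP (fun S : {set 'I_n} => #|S|) aS0) => S aS Smax.
pose proj := fun z : vec n => [ffun i => if i \in S then false else z i].
pose Y := [set y : vec n | proj y == y].
have cardY : #|Y| = 2 ^ (n - #|S|).
  transitivity #|pffun_on false (~: S) predT|.
    apply: eq_card => y; rewrite inE; apply/eqP/pffun_onP => [E|[Hs _]].
      split => //; apply/subsetP => i; rewrite !inE -E ffunE.
      by case: (i \in S).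
    apply/ffunP => i; rewrite ffunE; case: ifP => // iS.
    apply/esym/negbTE/negP => yi.
    have : i \in false.-support y by rewrite inE yi.
    by move/(subsetP Hs); rewrite inE iS.
  rewrite card_pffun_on; have := cardsC S; rewrite card_ord => HS.
  have -> : #|~: S| = n - #|S| by lia.
  by rewrite (eq_card (B := {: bool})) ?card_bool.
have key : forall y, y \in Y -> exists z, g z && (proj z == y).
  move=> y; rewrite inE => /eqP Yy; apply/existsP.
  apply: contraT => /existsPn H.
  suff : \big[addb/false]_(z | proj z == y) g z = true.
    rewrite big1 // => z Pz; move: (H z); rewrite Pz andbT; exact: negbTE.
  rewrite (eq_bigr (fun z => \big[addb/false]_T (a T && mono T z)));
    last by move=> z _; rewrite Ha anfE.
  rewrite exchange_big /=.
  rewrite (eq_bigr (fun T => T == S)) => [|T _].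
    by rewrite bigb (eq_bigl (fun T => T == S)) ?big_pred1_eq.
  rewrite -big_andl; case: (eqVneq T S) => [->|TS].
    rewrite aS /= bigb.
    pose zs : vec n := [ffun i => if i \in S then true else y i].
    rewrite (eq_bigl (fun z => z == zs)) ?big_pred1_eq // => z.
    apply/andP/eqP => [[/eqP Pz Mz]|->].
      apply/ffunP => i; rewrite ffunE; case: ifP => iS.
        by move/forallP: Mz => /(_ i); rewrite iS.
      by rewrite -Pz ffunE iS.
    split; last by apply/forallP => i; rewrite ffunE; case: (i \in S).
    apply/eqP/ffunP => i; rewrite !ffunE; case: ifP => iS //; rewrite ?iS //.
    by rewrite -Yy ffunE iS.
  case aT: (a T) => //=.
  have : ~~ (S \subset T).
    apply: contra TS => sST; rewrite eq_sym eqEcard sST.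
    exact: Smax.
  case/subsetPn => j jS jT.
  apply: (big_flip (j := j)) => z.
    congr (_ == y); apply/ffunP => i; rewrite !ffunE; case: ifP => // iS.
    by case: eqP => // ij; move: iS; rewrite ij jS.
  apply: eq_forallb => i; rewrite ffunE; case: eqP => // ->.
  by rewrite (negbTE jT).
have sub : Y \subset proj @: [set z | g z].
  apply/subsetP => y /key [z /andP[gz /eqP <-]]; apply: imset_f; by rewrite inE.
have := leq_trans (subset_leq_card sub) (leq_imset_card _ _).
rewrite cardY => H.
have HSe := Ba S aS.
apply: (@leq_trans (2 ^ (n - #|S|))); first by apply: leq_pexp2l => //; lia.
apply: leq_trans H _; apply: eq_leq; apply: eq_card => z; by rewrite !inE.
Qed.


Lemma bigmin_le (I : eqType) (r : seq I) (P : pred I) (F : I -> nat) m i0 :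
  i0 \in r -> P i0 -> \big[minn/m]_(i <- r | P i) F i <= F i0.
Proof.
elim: r => //= x r IH; rewrite inE big_cons => /orP[/eqP ->|ir] Pi.
  by rewrite Pi geq_minl.
case: (P x); last exact: IH.
by apply: leq_trans (geq_minr _ _) _; exact: IH.
Qed.

Lemma LDA_le_n1 (h : boolfun n) : LDA h <= n.+1.
Proof.
rewrite /LDA; elim/big_ind: _ => //= [x y Hx Hy|i _].
  exact: leq_trans (geq_minl _ _) Hx.
exact: ltnW (ltn_ord i).
Qed.

Lemma LDA_le (h : boolfun n) (j : nat) : j <= n -> has_ann_le h j -> LDA h <= j.
Proof.
move=> jn Hj; rewrite /LDA.
have jn1 : j < n.+1 by [].
apply: (@leq_trans (nat_of_ord (Ordinal jn1))) => //.
exact: bigmin_le (mem_index_enum (Ordinal jn1)) _.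
Qed.

Lemma LDA_spec (h : boolfun n) : LDA h <= n -> has_ann_le h (LDA h).
Proof.
have : (LDA h = n.+1) \/ has_ann_le h (LDA h).
  rewrite /LDA; elim/big_ind: _ => [|x y Hx Hy|i Hi]; [by left| |by right].
  rewrite /minn; case: ifP => //.
case=> [->|//]; by rewrite ltnn.
Qed.

Lemma core (H delta : boolfun n) e d : LDA H = e -> e <= n ->
  wH delta < 2 ^ (n - e) -> (wH delta).+1 < 2 ^ d.+1 ->
  has_ann_le (bf_add H delta) (e + d).
Proof.
move=> HL en Hw1 Hw2.
have /existsP[g /and3P[g0 /eqP Hg /deg_leP dg]] : has_ann_le H e.
  by rewrite -HL; apply: LDA_spec; rewrite HL.
have [x [gx dx]] : exists x, g x /\ ~~ delta x.
  have gex : exists x, g x.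
    apply/existsP; apply: contraR g0 => /existsPn Hn; apply/eqP/ffunP => x.
    by rewrite ffunE; exact/negbTE/Hn.
  have W := weight_lb dg gex.
  case/boolP: [exists x, g x && ~~ delta x] => [/existsP[x /andP[]]|/existsPn Hn].
    by move=> *; exists x.
  have : #|[pred x | g x]| <= wH delta.
    apply: subset_leq_card; apply/subsetP => x; rewrite !inE => gx.
    by move: (Hn x); rewrite gx /= negbK.
  by move=> Hc; move: (leq_ltn_trans (leq_trans W Hc) Hw1); rewrite ltnn.
have Hcard : #|x |: [set z | delta z]| < 2 ^ d.+1.
  rewrite cardsU1.
  have -> : #|[set z | delta z]| = wH delta by apply: eq_card => z; rewrite inE.
  by apply: leq_ltn_trans Hw2; rewrite -add1n leq_add2r leq_b1.
have [h [dh Eh]] := @interp d (x |: [set z | delta z]) (fun z => z == x) Hcard.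
apply/existsP; exists [ffun z => g z && h z]; apply/and3P; split.
- apply/eqP => /ffunP /(_ x); rewrite !ffunE gx Eh ?eqxx //; exact: setU11.
- apply/eqP/ffunP => z; rewrite !ffunE.
  case gz: (g z); last by rewrite andbF.
  have := congr1 (fun F : boolfun n => F z) Hg; rewrite /= !ffunE gz andbT => ->.
  case dz: (delta z) => //=.
  rewrite Eh; last by rewrite !inE dz orbT.
  by apply/eqP => zx; move: dx; rewrite -zx dz.
- apply/deg_leP; apply: (isdeg_ext (F := fun z => g z && h z)); first exact: isdeg_mul.
  by move=> z; rewrite ffunE.
Qed.

End Deg.

Lemma addA1 n (f delta : boolfun n) :
  bf_add (bf_add (bf_one n) f) delta = bf_add (bf_one n) (bf_add f delta).
Proof. by apply/ffunP => z; rewrite !ffunE addbA. Qed.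

Lemma addKd n (f delta : boolfun n) : bf_add (bf_add f delta) delta = f.
Proof. by apply/ffunP => z; rewrite !ffunE addbK. Qed.

Lemma AI_le n (F : boolfun n) : AI F <= n.+1.
Proof. exact: leq_trans (geq_minl _ _) (LDA_le_n1 _). Qed.

Lemma Lmain n (F delta : boolfun n) e d : AI F = e -> e + d <= n ->
  wH delta < 2 ^ (n - e) -> (wH delta).+1 < 2 ^ d.+1 ->
  AI (bf_add F delta) <= e + d.
Proof.
rewrite /AI => HAI ed Hw1 Hw2.
have en : e <= n by apply: leq_trans ed; apply: leq_addr.
have edn : e + d <= n := ed.
case: (leqP (LDA F) (LDA (bf_add (bf_one n) F))) => Hle.
- move: HAI; rewrite (elimT minn_idPl Hle) => HL.
  apply: leq_trans (geq_minl _ _) _; apply: LDA_le => //.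
  exact: core HL en Hw1 Hw2.
- move: HAI; rewrite (elimT minn_idPr (ltnW Hle)) => HL.
  apply: leq_trans (geq_minr _ _) _; rewrite -addA1; apply: LDA_le => //.
  exact: core HL en Hw1 Hw2.
Qed.

Theorem proposition12 (n k d : nat) (f delta : boolfun n) :
  0 < k -> 0 < d -> AI f = k ->
  wH delta < minn (2 ^ (n - k)) (2 ^ d.+1 - 1) ->
  AI (bf_add f delta) <= AI f + d /\ AI f <= AI (bf_add f delta) + d.
Proof.
move=> _ _ Hk; rewrite leq_min => /andP[Hw1 Hw2'].
have Hw2 : (wH delta).+1 < 2 ^ d.+1.
  move: Hw2'; set p := 2 ^ d.+1; set w := wH delta; lia.
rewrite Hk; split.
  case: (leqP (k + d) n) => kd; first exact: Lmain Hk kd Hw1 Hw2.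
  apply: leq_trans (AI_le _) _; exact: kd.
set k' := AI (bf_add f delta).
case: (leqP k k') => kk'; first by apply: leq_trans kk' (leq_addr _ _).
case: (leqP (k' + d) n) => kd.
  have Hw1' : wH delta < 2 ^ (n - k').
    apply: leq_trans Hw1 _; apply: leq_pexp2l => //; lia.
  have := Lmain (erefl k') kd Hw1' Hw2; rewrite addKd Hk; exact.
rewrite -Hk; apply: leq_trans (AI_le _) _; exact: kd.
Qed.
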